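(* Let $n\ge 2$, $\delta\in(0,1/2)$, let $g$ be admissible with $$-\infty<\liminf_{x\downarrow 0}x g(x)\le\limsup_{x\downarrow 0}x g(x)<0,$$ and let $X$ be the market model driven by $g$ with all $\mu_i(0)\in(0,1-\delta)$. Then, almost surely, no market weight $\mu_i$ ever reaches $0$ (up to the first time some market weight reaches $1-\delta$).
   Context: Fix an integer $n\ge 2$ and $\delta\in(0,1)$. A continuous function $g:(0,1-\delta)\to\mathbb{R}$ is called admissible if $\lim_{x\uparrow 1-\delta}g(x)=+\infty$. Let $W=(W_1,\dots,W_n)$ be an $n$-dimensional standard Brownian motion on a filtered probability space whose filtration satisfies the usual conditions and is generated by $W$. The market model driven by $g$ is an $(0,\infty)^n$-valued continuous process $X(t)=(X_1(t),\dots,X_n(t))$ satisfying $$d\log X_i(t)=-g(\mu_i(t))\,dt+dW_i(t),\qquad i=1,\dots,n,$$ where $S(t)=X_1(t)+\dots+X_n(t)$ and $\mu_i(t)=X_i(t)/S(t)$ are the market weights (the equation makes sense as long as all $\mu_i(t)\in(0,1-\delta)$). *)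

(* Defs.v *)
From HB Require Import structures.
From mathcomp Require Import all_boot all_order all_algebra.
From mathcomp Require Import all_classical all_reals all_analysis.
Set Implicit Arguments. Unset Strict Implicit. Unset Printing Implicit Defensive.
Import Order.TTheory GRing.Theory Num.Theory.
Import numFieldNormedType.Exports.
Local Open Scope classical_set_scope.
Local Open Scope ring_scope.

Section Market.
Context (R : realType) (d : measure_display) (Omega : measurableType d)
        (P : probability Omega R).

(* An n-dimensional process: W i w t = i-th coordinate at time t of path w. *)

(* Independent Gaussian increments: for all times 0 <= t_0 < t_1 < ... < t_k,
   the family (W_i(t_{j+1}) - W_i(t_j))_{i<n, j<k} is mutually independent
   and W_i(t_{j+1}) - W_i(t_j) ~ N(0, t_{j+1} - t_j) (normal_prob takes the
   standard deviation). *)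
Definition gaussian_indep_increments (n : nat) (W : 'I_n -> Omega -> R -> R) :=
  forall (k : nat) (t : nat -> R),
    0 <= t 0%N -> (forall j : nat, (j < k)%N -> t j < t j.+1) ->
    forall A : 'I_n -> 'I_k -> set R, (forall i j, measurable (A i j)) ->
      P [set w | forall i j, A i j (W i w (t j.+1) - W i w (t j))] =
      (\prod_(i < n) \prod_(j < k)
         normal_prob 0 (Num.sqrt (t j.+1 - t j)) (A i j))%E.

Definition standard_BM (n : nat) (W : 'I_n -> Omega -> R -> R) :=
  [/\ (forall i t, 0 <= t -> measurable_fun setT (fun w => W i w t)),
      {ae P, forall w, forall i : 'I_n,
          W i w 0 = 0 /\ {within [set t | 0 <= t], continuous (W i w)}} &
      gaussian_indep_increments W].

Definition natural_gen (n : nat) (W : 'I_n -> Omega -> R -> R) (t : R)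
  : set (set Omega) :=
  [set A | exists i s C, [/\ 0 <= s <= t, measurable C &
                           A = (fun w => W i w s) @^-1` C]].

Definition augmented_natural (n : nat) (W : 'I_n -> Omega -> R -> R) (t : R)
  (A : set Omega) :=
  exists B, <<s natural_gen W t >> B /\
    exists N, [/\ measurable N, P N = 0%E & (A `\` B) `|` (B `\` A) `<=` N].

(* The filtration generated by W satisfying the usual conditions (usual
   augmentation): F_t = /\_{u > t} (sigma(W_s, s <= u) v null sets). *)
Definition BM_filtration (n : nat) (W : 'I_n -> Omega -> R -> R) (t : R)
  (A : set Omega) :=
  measurable A /\ forall u, t < u -> augmented_natural W u A.

Definition total (n : nat) (x : 'I_n -> R) := \sum_(j < n) x j.

Definition market_weight (n : nat) (x : 'I_n -> R) (i : 'I_n) := x i / total x.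

(* Pathwise requirements on the market model driven by g, on the stochastic
   interval [0, zeta w): positivity, weights in (0,1-delta), continuity, the
   integrated form of  d log X_i = - g(mu_i) dt + dW_i,  and maximality of
   the lifetime zeta (if finite, the weights approach the boundary of
   (0, 1 - delta) as t increases to zeta). *)
Definition market_path (n : nat) (delta : R) (g : R -> R)
  (W : 'I_n -> Omega -> R -> R) (X : Omega -> R -> 'I_n -> R)
  (zeta : Omega -> \bar R) (w : Omega) :=
  [/\ (0 < zeta w)%E,
      (forall t i, 0 <= t -> (t%:E < zeta w)%E ->
         0 < X w t i /\ 0 < market_weight (X w t) i < 1 - delta),
      (forall i, {within [set t | 0 <= t /\ (t%:E < zeta w)%E],
                   continuous (fun t => X w t i)}),
      (forall t i, 0 <= t -> (t%:E < zeta w)%E ->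
         ln (X w t i) = ln (X w 0 i)
           - (\int[lebesgue_measure]_(s in `[0, t]) g (market_weight (X w s) i))
           + W i w t) &
      ((zeta w < +oo)%E -> forall eps, 0 < eps -> forall s, 0 <= s ->
         (s%:E < zeta w)%E -> exists t, [/\ s < t, (t%:E < zeta w)%E &
           exists i, market_weight (X w t) i < eps \/
                     1 - delta - eps < market_weight (X w t) i])].

Definition market_model (n : nat) (delta : R) (g : R -> R)
  (W : 'I_n -> Omega -> R -> R) (X : Omega -> R -> 'I_n -> R)
  (zeta : Omega -> \bar R) :=
  [/\ (forall t, 0 <= t -> BM_filtration W t [set w | (t%:E < zeta w)%E]),
      (forall t i C, 0 <= t -> measurable C ->
         BM_filtration W t [set w | (t%:E < zeta w)%E /\ C (X w t i)]) &
      {ae P, forall w, market_path delta g W X zeta w}].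

End Market.

Definition admissible (R : realType) (delta : R) (g : R -> R) :=
  {within `]0, 1 - delta[%classic, continuous g} /\
  (g x @[x --> (1 - delta)^'-] --> +oo)%R.

(* Main.v *)
Require Import Defs.
From HB Require Import structures.
From mathcomp Require Import all_boot all_order all_algebra.
From mathcomp Require Import all_classical all_reals all_analysis.
From mathcomp Require Import ring lra.
Import Order.TTheory GRing.Theory Num.Theory.
Import numFieldNormedType.Exports.
Local Open Scope classical_set_scope.
Local Open Scope ring_scope.
Set Implicit Arguments. Unset Strict Implicit.

Lemma near_right_itv (R : realType) (a : R) (P : R -> Prop) :
  (\forall y \near a^'+, P y) -> exists2 e, 0 < e & forall y, a < y -> y < a + e -> P y.
Proof.
move=> /nbhs_ballP[e /= e0 He]; exists e => // y ay ye; apply: He => //.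
rewrite /ball /= ltr_distlC; apply/andP; split; last by [].
by rewrite (lt_trans _ ay)// ltrBlDr ltrDl.
Qed.

Lemma esup_neg (R : realType) (f : R -> R) (a : R) :
  (limf_esup (fun x => (f x)%:E) a^'+ < 0)%E ->
  exists2 e, 0 < e & exists2 c, 0 < c & forall x, a < x -> x < a + e -> f x <= - c.
Proof.
rewrite limf_esupE => /ereal_inf_lt[_ [V FV <-]] Vlt.
have [e e0 He] := @near_right_itv R a V FV.
exists e => //.
have ub x : V x -> ((f x)%:E <= ereal_sup ((fun x => (f x)%:E) @` V))%E.
  by move=> Vx; apply: ereal_sup_ubound; exists x.
move: Vlt ub; case: (ereal_sup _) => [r| |] //.
- rewrite lte_fin => r0 ub; exists (- r); first by rewrite oppr_gt0.
  by move=> x ax xe; rewrite opprK -lee_fin; apply: ub; apply: He.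
- move=> _ ub; exists 1 => // x ax xe.
  by have := ub x (He x ax xe); rewrite leeNy_eq.
Qed.

Lemma einf_fin (R : realType) (f : R -> R) (a : R) :
  (-oo < limf_einf (fun x => (f x)%:E) a^'+)%E ->
  exists2 e, 0 < e & exists C, forall x, a < x -> x < a + e -> - f x <= C.
Proof.
rewrite /limf_einf; set s := limf_esup _ _ => H.

have : (s < +oo)%E by rewrite ltey; apply/eqP => sE; move: H; rewrite sE.
rewrite /s limf_esupE => /ereal_inf_lt[_ [V FV <-]] Vlt.
have [e e0 He] := @near_right_itv R a V FV.
exists e => //.
have ub x : V x -> ((- f x)%:E <= ereal_sup ((\- (fun x => (f x)%:E)) @` V))%E.
  by move=> Vx; apply: ereal_sup_ubound; exists x.
move: Vlt ub; case: (ereal_sup _) => [r| |] //.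
- move=> _ ub; exists r.
  by move=> x ax xe; rewrite -lee_fin; apply: ub; apply: He.
- move=> _ ub; exists 1 => // x ax xe.
  by have := ub x (He x ax xe); rewrite leeNy_eq.
Qed.

Lemma near_left_itv (R : realType) (a : R) (P : R -> Prop) :
  (\forall y \near a^'-, P y) -> exists2 e, 0 < e & forall y, a - e < y -> y < a -> P y.
Proof.
move=> /nbhs_ballP[e /= e0 He]; exists e => // y ay ye; apply: He => //.
rewrite /ball /= ltr_distlC ay /=. by rewrite (lt_trans ye)// ltrDl.
Qed.

Lemma adm_cont (R : realType) (delta : R) g : admissible delta g ->
  forall x, 0 < x -> x < 1 - delta -> {for x, continuous g}.
Proof.
move=> [cg _] x x0 x1.
move: cg; rewrite continuous_open_subspace; last exact: itv_open.
by apply; rewrite inE /= in_itv /= x0 x1.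
Qed.

Lemma g_global (R : realType) (delta : R) g : 0 < delta < 1 / 2 ->
  admissible delta g ->
  (forall e0 C0, 0 < e0 -> (forall x, 0 < x -> x < e0 -> - (x * g x) <= C0) ->
  exists C, 0 <= C /\ forall x, 0 < x -> x < 1 - delta -> - (x * g x) <= C).
Proof.
move=> /andP[d0 d1] ad e0 C0 e00 H0.
have d1' : 0 < 1 - delta.
  by rewrite subr_gt0 (lt_trans d1)// ltr_pdivrMr// mul1r ltr1n.
have [e1 e10 H1] : exists2 e1, 0 < e1 & forall y, 1 - delta - e1 < y -> y < 1 - delta -> 0 <= g y.
  apply: near_left_itv; have := ad.2; move/cvgryPge => /(_ 0).
  by apply: filterS.
set b := 1 - delta - Num.min e1 ((1 - delta) / 2).
have mpos : 0 < Num.min e1 ((1 - delta) / 2) by rewrite lt_min e10 divr_gt0.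
have b0 : 0 < b.
  rewrite /b subr_gt0 gt_min; apply/orP; right.
  by rewrite ltr_pdivrMr // ltr_pMr // ltr1n.
have b1 : b < 1 - delta by rewrite /b ltrBlDr ltrDl.
set a' := Num.min e0 b.
have a'0 : 0 < a' by rewrite lt_min e00 b0.
have a'b : a' <= b by rewrite ge_min lexx orbT.
have cga : {within `[a', b], continuous g}.
  apply: continuous_subspaceW ad.1 => x /=; rewrite !in_itv /= => /andP[ax xb].
  by rewrite (lt_le_trans a'0 ax) (le_lt_trans xb b1).
have [xm xmab Hxm] := EVT_min a'b cga.
exists (`|C0| + `|g xm|); split; first by rewrite addr_ge0.
move=> x x0 x1.
have [xe0|xe0] := ltP x e0.
  by apply: (le_trans (H0 x x0 xe0)); rewrite (le_trans (ler_norm _))// lerDl.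
have [xb|xb] := leP x b.
  have xa : a' <= x by rewrite (le_trans _ xe0)// ge_min lexx.
  have := Hxm x; rewrite in_itv /= xa xb => /(_ isT) gxm.
  have x1' : x <= 1 by rewrite (le_trans (ltW x1))// lerBlDr lerDl ltW.
  apply: (le_trans _ (ler_wpDl (normr_ge0 C0) (lexx _))).
  rewrite -mulrN (le_trans (ler_wpM2l (ltW x0) (_ : - g x <= `|g xm|)))//.
    by rewrite -normrN; apply: (le_trans _ (ler_norm _)); rewrite lerN2.
  by rewrite -[X in _ <= X]mul1r ler_wpM2r.
have gx0 : 0 <= g x.
  apply: H1 => //; apply: le_lt_trans xb.
  by rewrite /b lerD2l lerN2 ge_min lexx.
apply: (le_trans _ (addr_ge0 (normr_ge0 C0) (normr_ge0 (g xm)))).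
by rewrite oppr_le0 mulr_ge0 // ltW.
Qed.

Lemma within_sum (R : realType) (A : set R) n (f : 'I_n -> R -> R) :
  (forall j, {within A, continuous (f j)}) ->
  {within A, continuous (fun t => \sum_(j < n) f j t)}.
Proof.
move=> H; rewrite continuous_subspace_in => x xA.
apply: cvg_big => // [|j _].
  exact: add_continuous.
by have := H j; rewrite continuous_subspace_in; apply.
Qed.

Lemma bound_W (R : realType) n (W : 'I_n -> R -> R) (T : R) :
  0 <= T -> (forall k, {within [set t | 0 <= t], continuous (W k)}) ->
  exists B, 0 <= B /\ forall k t, 0 <= t -> t <= T -> `|W k t| <= B.
Proof.
move=> T0 HW.
have H k : exists B, 0 <= B /\ forall t, 0 <= t -> t <= T -> `|W k t| <= B.
  have c : {within `[0, T], continuous (fun t => `|W k t|)}.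
    move=> x; apply: continuous_comp; last exact: norm_continuous.
    apply: (continuous_subspaceW _ (HW k)).
    by move=> y /=; rewrite in_itv /= => /andP[].
  have [m _ Hm] := EVT_max T0 c.
  exists `|W k m|; split => // t t0 tT; apply: Hm; by rewrite in_itv /= t0 tT.
have /choice[Bf HB] := H.
exists (\sum_k Bf k); split; first by apply: sumr_ge0 => k _; case: (HB k).
move=> k t t0 tT; apply: (le_trans ((HB k).2 t t0 tT)).
rewrite (bigD1 k) //= lerDl; apply: sumr_ge0 => j _; by case: (HB j).

Qed.

Lemma exp_ratio (R : realType) (a b c : R) :
  expR a / expR b * expR c = expR (a - b + c).
Proof. by rewrite expRD expRB. Qed.

Lemma exists_between (R : realType) (t : R) (Z : \bar R) : (t%:E < Z)%E ->
  exists u, t < u /\ (u%:E < Z)%E.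
Proof.
case: Z => [r| |] //.
  rewrite lte_fin => tr; exists ((t + r) / 2); split.
    by rewrite ltr_pdivlMr // mulrDr mulr1 ltrD2l.
  by rewrite lte_fin ltr_pdivrMr // mulrDr mulr1 ltrD2r.
by move=> _; exists (t + 1); split; [rewrite ltrDl | exact: ltry].
Qed.

Lemma within_M (R : realType) (A : set R) (f h : R -> R) :
  {within A, continuous f} -> {within A, continuous h} ->
  {within A, continuous (fun x => f x * h x)}.
Proof.
move=> cf ch; rewrite continuous_subspace_in => x xA.
apply: cvgM.
  by move: cf; rewrite continuous_subspace_in; apply.
by move: ch; rewrite continuous_subspace_in; apply.
Qed.

Lemma within_B (R : realType) (A : set R) (f h : R -> R) :
  {within A, continuous f} -> {within A, continuous h} ->
  {within A, continuous (fun x => f x - h x)}.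
Proof.
move=> cf ch; rewrite continuous_subspace_in => x xA.
apply: cvgB.
  by move: cf; rewrite continuous_subspace_in; apply.
by move: ch; rewrite continuous_subspace_in; apply.
Qed.

Lemma within_V (R : realType) (A : set R) (f : R -> R) :
  (forall x, A x -> f x != 0) -> {within A, continuous f} ->
  {within A, continuous (fun x => (f x)^-1)}.
Proof.
move=> f0 cf; rewrite continuous_subspace_in => x xA.
apply: cvgV.
  by apply: f0; rewrite inE in xA.
by move: cf; rewrite continuous_subspace_in; apply.
Qed.

Lemma within_comp (R : realType) (A : set R) (f h : R -> R) :
  {within A, continuous f} -> (forall x, A x -> {for f x, continuous h}) ->
  {within A, continuous (fun x => h (f x))}.
Proof.
move=> cf ch; move: cf; rewrite continuous_subspace_in => cf.
rewrite continuous_subspace_in => x xA.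
apply: continuous_comp; first exact: cf.
by apply: ch; rewrite inE in xA.
Qed.

Lemma within_at (R : realType) (A : set R) (f : R -> R) (a b t : R) :
  `]a, b[ `<=` A -> {within A, continuous f} -> a < t -> t < b ->
  {for t, continuous f}.
Proof.
move=> sub cf at_ tb.
have := continuous_subspaceW sub cf.
rewrite continuous_open_subspace; last exact: itv_open.
by apply; rewrite inE /= in_itv /= at_ tb.
Qed.

Lemma near_itv (R : realType) (a b t : R) : a < t -> t < b ->
  \forall s \near t, a < s /\ s < b.
Proof.
move=> at_ tb.
have : nbhs t `]a, b[%classic.
  by apply: (itv_open a b); rewrite /= in_itv /= at_ tb.
apply: filterS => s; by rewrite /= in_itv /= => /andP.
Qed.

Lemma det_bound (R : realType) (n : nat) (delta : R) (g : R -> R)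
  (W : 'I_n -> R -> R) (X : R -> 'I_n -> R) (Z : \bar R) (C a1 c : R) :
  (forall x, 0 < x -> x < 1 - delta -> {for x, continuous g}) ->
  0 <= C -> (forall x, 0 < x -> x < 1 - delta -> - (x * g x) <= C) ->
  0 < a1 -> 0 < c -> (forall x, 0 < x -> x < a1 -> x * g x <= - c) ->
  (forall k, {within [set t | 0 <= t], continuous (W k)}) ->
  (0 < Z)%E ->
  (forall t i, 0 <= t -> (t%:E < Z)%E ->
     0 < X t i /\ 0 < market_weight (X t) i < 1 - delta) ->
  (forall i, {within [set t | 0 <= t /\ (t%:E < Z)%E],
                   continuous (fun t => X t i)}) ->
  (forall t i, 0 <= t -> (t%:E < Z)%E ->
     ln (X t i) = ln (X 0 i)
       - (\int[lebesgue_measure]_(s in `[0, t]) g (market_weight (X s) i))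
       + W i t) ->
  forall i T, 0 <= T -> exists eps, 0 < eps /\
    forall t, 0 <= t <= T -> (t%:E < Z)%E -> eps <= market_weight (X t) i.
Proof.
move=> gc C0 HC a10 c0 Ha HW Z0 Hpos HX Heq i T T0.
have [B [B0 HB]] := bound_W T0 HW.
pose E := expR (2 * B).
pose mu j t := market_weight (X t) j.
pose G j t := \int[lebesgue_measure]_(s in `[0, t]) g (mu j s).
pose qX j t := X t j / X t i * expR (W i t - W j t).
pose qG j t := X 0 j / X 0 i * expR (G i t - G j t).
pose Q t := \sum_(j < n) qX j t.
pose dQ t := \sum_(j < n) qG j t * (g (mu i t) - g (mu j t)).
pose A := [set t : R | 0 <= t /\ (t%:E < Z)%E].
pose M := E / a1 + n%:R * C * E / c.
have E0 : 0 < E by apply: expR_gt0.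
have M0 : 0 <= M.
  by apply: addr_ge0; apply: divr_ge0; rewrite ?mulr_ge0 ?exprn_ge0 // ltW.
have A0 : A 0 by split => //.
have F_Xpos : forall j t, A t -> 0 < X t j.
  by move=> j t [t0 tZ]; case: (Hpos t j t0 tZ).
have F_mupos : forall j t, A t -> 0 < mu j t.
  by move=> j t [t0 tZ]; case: (Hpos t j t0 tZ) => _ /andP[].
have F_mu1 : forall j t, A t -> mu j t < 1 - delta.
  by move=> j t [t0 tZ]; case: (Hpos t j t0 tZ) => _ /andP[].
have F_Spos : forall t, A t -> 0 < Defs.total (X t).
  by move=> t At; apply: (lt_le_trans (F_Xpos i t At)); rewrite /Defs.total (bigD1 i) //= lerDl sumr_ge0 // => j _; apply: ltW; apply: F_Xpos.
have F_qpos : forall j t, A t -> 0 < qX j t.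
  by move=> j t At; rewrite /qX mulr_gt0 ?divr_gt0 ?F_Xpos ?expR_gt0.
have F_WE : forall j k t, 0 <= t -> t <= T -> expR (W j t - W k t) <= E.
  move=> j k t t0 tT; rewrite /E ler_expR.
  have h1 := HB j t t0 tT; have h2 := HB k t t0 tT.
  have h3 := ler_norm (W j t); have h4 := ler_norm (- W k t).
  rewrite normrN in h4; lra.
have F_inv : forall t, A t -> (mu i t)^-1 = \sum_(j < n) X t j / X t i.
  move=> t At; rewrite /mu /market_weight invf_div /Defs.total mulr_suml //.
have F_b1 : forall t, A t -> t <= T -> (mu i t)^-1 <= E * Q t.
  move=> t At tT; rewrite F_inv // /Q mulr_sumr; apply: ler_sum => j _.
  have -> : X t j / X t i = qX j t * expR (W j t - W i t).
    rewrite /qX -mulrA -expRD.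
    have -> : W i t - W j t + (W j t - W i t) = 0 by ring.
    by rewrite expR0 mulr1.
  by rewrite mulrC ler_wpM2r ?F_WE ?(ltW (F_qpos _ _ At)) //; case: At.
have F_b2 : forall t, A t -> t <= T -> Q t <= E * (mu i t)^-1.
  move=> t At tT; rewrite F_inv // /Q mulr_sumr; apply: ler_sum => j _.
  rewrite /qX mulrC ler_wpM2r ?F_WE //; last by case: At.
  by rewrite ltW // divr_gt0 ?F_Xpos.
have F_qmu : forall j t, A t -> t <= T -> qX j t / mu j t <= E * (mu i t)^-1.
  move=> j t At tT.
  have -> : qX j t / mu j t = expR (W i t - W j t) * (mu i t)^-1.
    rewrite /qX /mu /market_weight !invf_div.
    have := F_Xpos j t At; have := F_Xpos i t At; have := F_Spos t At.
    move=> h1 h2 h3; field.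
    by rewrite !gt_eqF.
  apply: ler_wpM2r; first by rewrite invr_ge0 ltW // F_mupos.
  by case: At => t0 _; apply: F_WE.
have F_eq : forall j t, A t -> qX j t = qG j t.
  move=> j t [t0 tZ].
  have ex0 : forall k, X 0 k = expR (ln (X 0 k)).
    by move=> k; rewrite lnK // posrE; case: (Hpos 0 k (lexx 0) Z0).
  have ex : forall k, X t k = expR (ln (X 0 k) - G k t + W k t).
    by move=> k; rewrite -Heq // lnK // posrE; case: (Hpos t k t0 tZ).
  rewrite /qX /qG (ex0 j) (ex0 i) (ex j) (ex i) !exp_ratio; congr expR; ring.
have HW' : forall k, {within A, continuous (W k)}.
  by move=> k; apply: (continuous_subspaceW _ (HW k)) => y [].
have F_mucont : forall j, {within A, continuous (mu j)}.
  move=> j; rewrite /mu /market_weight.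
  apply: (within_M (HX j)); apply: within_V.
    by move=> x Ax; rewrite gt_eqF // F_Spos.
  exact: within_sum HX.
have F_cont : {within A, continuous Q}.
  apply: within_sum => j; rewrite /qX.
  apply: within_M; first apply: within_M (HX j) _.
    by apply: within_V (HX i) => x Ax; rewrite gt_eqF // F_Xpos.
  apply: within_comp (within_B (HW' i) (HW' j)) _ => x _.
  exact: continuous_expR.
have F_der : forall t, 0 < t -> (t%:E < Z)%E -> is_derive t 1 Q (dQ t).
  move=> t t0 tZ.
  have [u [tu uZ]] := exists_between tZ.
  have subu : `[0, u] `<=` A.
    move=> y /=; rewrite in_itv /= => /andP[y0 yu]; split => //.
    by apply: le_lt_trans uZ; rewrite lee_fin.
  have subo : `]0, u[ `<=` A.
    move=> y /=; rewrite in_itv /= => /andP[y0 yu]; split; first exact: ltW.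
    by apply: lt_trans uZ; rewrite lte_fin.
  have dG : forall j, is_derive t 1 (G j) (g (mu j t)).
    move=> j.
    have cg : {within A, continuous (fun s => g (mu j s))}.
      apply: within_comp (F_mucont j) _ => x Ax.
      exact: gc (F_mupos j x Ax) (F_mu1 j x Ax).
    have int : lebesgue_measure.-integrable `[0, u] (EFin \o (fun s => g (mu j s))).
      apply: continuous_compact_integrable; first exact: segment_compact.
      exact: continuous_subspaceW subu cg.
    have ct : {for t, continuous (fun s => g (mu j s))}.
      exact: within_at subo cg t0 tu.
    have [d1 d2] := continuous_FTC1_closed tu int t0 ct.
    apply: DeriveDef; first exact: d1.
    by rewrite -derive1E.
  have dq : forall j, is_derive t 1 (qG j)
      (X 0 j / X 0 i * (expR (G i t - G j t) * (g (mu i t) - g (mu j t)))).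
    move=> j.
    have dh : is_derive t 1 (G i - G j) (g (mu i t) - g (mu j t)).
      exact: is_deriveB (dG i) (dG j).
    have de := is_derive1_comp (is_derive_expR _) dh.
    exact (is_deriveZ (X 0 j / X 0 i) de).
  have ds : is_derive t 1 (\sum_(j < n) qG j) (dQ t).
    have -> : dQ t = \sum_(j < n) (X 0 j / X 0 i *
        (expR (G i t - G j t) * (g (mu i t) - g (mu j t)))).
      by apply: eq_bigr => j _; rewrite /qG mulrA.
    exact: is_derive_sum dq.
  apply: near_eq_is_derive ds.
  have := near_itv t0 tu; apply: filterS => s [s0 su].
  rewrite fct_sumE /Q; apply: eq_bigr => j _; rewrite F_eq //.
  split; first exact: ltW.
  by apply: lt_trans uZ; rewrite lte_fin.
have F_dneg : forall t, 0 < t -> t <= T -> (t%:E < Z)%E -> M < Q t -> dQ t < 0.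
  move=> t t0 tT tZ MQ.
  have At : A t by split; [exact: ltW|].
  have hd : dQ t = Q t * g (mu i t) + \sum_(j < n) qX j t * (- g (mu j t)).
    rewrite /dQ /Q mulr_suml -big_split /=; apply: eq_bigr => j _.
    rewrite -F_eq //; ring.
  pose y := (mu i t)^-1.
  have y0 : 0 < y by rewrite invr_gt0 F_mupos.
  have hS : \sum_(j < n) qX j t * (- g (mu j t)) <= n%:R * (E * y * C).
    have : \sum_(j < n) qX j t * (- g (mu j t)) <= \sum_(j < n) (E * y * C).
      apply: ler_sum => j _.
      have mj := F_mupos j t At; have hc := HC (mu j t) mj (F_mu1 j t At).
      have hq := F_qmu j t At tT; have qq := F_qpos j t At.
      have -> : qX j t * - g (mu j t) = (qX j t / mu j t) * (- (mu j t * g (mu j t))).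
        by field; rewrite gt_eqF.
      apply: (le_trans (ler_wpM2l _ hc)); first by rewrite divr_ge0 ?ltW.
      by rewrite ler_wpM2r.
    by rewrite sumr_const card_ord mulr_natl.
  have hb := F_b2 t At tT.
  have EM : E / a1 <= M by rewrite /M lerDl divr_ge0 ?mulr_ge0 // ltW.
  have mua : mu i t < a1.
    have : E / a1 < E * y by apply: (le_lt_trans EM); apply: lt_le_trans hb.
    rewrite ltr_pM2l // => h.
    by move: h; rewrite /y ltf_pV2 // posrE ?F_mupos.
  have mp := F_mupos i t At.
  have hg : g (mu i t) <= - c * y.
    have := Ha _ mp mua => h.
    rewrite -(ler_pM2l mp).
    have -> : mu i t * (- c * y) = - c by rewrite /y; field; rewrite gt_eqF.
    exact: h.
  have HCMb : n%:R * C * E / c <= M by rewrite /M lerDr divr_ge0 // ltW.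
  have hQ : n%:R * C * E < c * Q t.
    by rewrite -ltr_pdivrMl // mulrC; apply: (le_lt_trans HCMb).
  have Q0 : 0 < Q t by apply: le_lt_trans MQ.
  have h1 := ler_wpM2l (ltW Q0) hg.
  have h2 : y * (n%:R * C * E) < y * (c * Q t) by rewrite ltr_pM2l.
  rewrite hd; nra.
have Q00 : 0 < Q 0.
  apply: (lt_le_trans (F_qpos i 0 A0)); rewrite /Q (bigD1 i) //= lerDl.
  by apply: sumr_ge0 => j _; apply: ltW; apply: F_qpos.
have claim : forall x, A x -> x <= T -> Q x <= Q 0 + M.
  move=> x [x0 xZ] xT; rewrite leNgt; apply/negP => Hx.
  have subA : forall y, 0 <= y -> y <= x -> A y.
    by move=> y y0 yx; split => //; apply: le_lt_trans xZ; rewrite lee_fin.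
  have cx : {within `[0, x], continuous Q}.
    apply: (continuous_subspaceW _ F_cont) => y /=; rewrite in_itv /=.
    by move=> /andP[y0 yx]; apply: subA.
  have [p p0x Hp] := EVT_max x0 cx.
  move: p0x; rewrite in_itv /= => /andP[p0 px].
  have Qp : Q 0 + M < Q p.
    by apply: (lt_le_trans Hx); apply: Hp; rewrite in_itv /= x0 lexx.
  have pp : 0 < p.
    rewrite lt_neqAle p0 andbT; apply/negP => /eqP p_eq0.
    by move: Qp; rewrite -p_eq0 ltNge lerDl M0.
  have [_ pZ] := subA p p0 px.
  have pT : p <= T by apply: le_trans xT.
  have dp := F_der p pp pZ.
  have cp : {for p, continuous Q}.
    apply: differentiable_continuous; apply/derivable1_diffP.
    by case: dp.
  have [e e0 He] : exists2 e, 0 < e & forall s, `|p - s| < e -> M < Q s.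
    have : \forall s \near p, M < Q s.
      by apply: (cvgr_gt (Q p) cp); apply: le_lt_trans Qp; rewrite lerDr ltW.
    move=> /nbhs_ballP[e /= e0 He]; exists e => // s ps.
  pose h := Num.min e p / 2.
  have h0 : 0 < h by rewrite divr_gt0 // lt_min e0 pp.
  have hp : h < p.
    rewrite /h ltr_pdivrMr // gt_min; apply/orP; right.
    by rewrite ltr_pMr // ltr1n.
  have he : h < e.
    rewrite /h ltr_pdivrMr // gt_min; apply/orP; left.
    by rewrite ltr_pMr // ltr1n.
  pose q := p - h.
  have qp : q < p by rewrite /q ltrBlDr ltrDl.
  have q0 : 0 < q by rewrite /q subr_gt0.
  have dQq : forall y, y \in `]q, p[ -> is_derive y 1 Q (dQ y).
    move=> y; rewrite in_itv /= => /andP[qy yp].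
    apply: F_der; first exact: lt_trans qy.
    by apply: lt_trans pZ; rewrite lte_fin.
  have cqp : {within `[q, p], continuous Q}.
    apply: (continuous_subspaceW _ F_cont) => y /=; rewrite in_itv /=.
    move=> /andP[qy yp]; apply: subA; first exact: (le_trans (ltW q0)).
    exact: le_trans px.
  have [xi xiqp Hxi] := MVT qp dQq cqp.
  move: xiqp; rewrite in_itv /= => /andP[qxi xip].
  have xi0 : 0 < xi by apply: lt_trans qxi.
  have dxi : dQ xi < 0.
    apply: F_dneg => //.
    - by apply: le_trans pT; apply: ltW.
    - by apply: lt_trans pZ; rewrite lte_fin.
    - apply: He; rewrite ger0_norm ?subr_ge0 ?ltW //.
      apply: lt_trans he; rewrite ltrBlDr -ltrBlDl //.
  have : Q p - Q q < 0.
    by rewrite Hxi nmulr_rlt0 // subr_gt0.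
  rewrite subr_lt0 ltNge Hp //.
  by rewrite in_itv /= (ltW q0) /= (le_trans (ltW qp)).
exists (E * (Q 0 + M))^-1; split.
  by rewrite invr_gt0 mulr_gt0 // ltr_wpDr.
move=> t /andP[t0 tT] tZ.
have At : A t by [].
have mu0 : 0 < mu i t by have [_ /andP[]] := Hpos t i t0 tZ.
rewrite -/(mu i t). rewrite -[mu i t]invrK lef_pV2 ?posrE ?invr_gt0 ?mulr_gt0 ?ltr_wpDr //.
apply: (le_trans (F_b1 t At tT)); rewrite ler_pM2l //; exact: claim.
all: by rewrite ?F_Xpos ?invr_gt0 ?F_Spos.
Qed.

Unset Implicit Arguments. Set Strict Implicit.

Theorem mainTheorem8 (R : realType) (d : measure_display)
  (Omega : measurableType d) (P : probability Omega R)
  (n : nat) (delta : R) (g : R -> R)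
  (W : 'I_n -> Omega -> R -> R) (X : Omega -> R -> 'I_n -> R)
  (zeta : Omega -> \bar R) :
  (2 <= n)%N ->
  0 < delta < 1 / 2 ->
  admissible delta g ->
  (-oo < limf_einf (fun x : R => (x * g x)%:E) (0%R^'+))%E ->
  (limf_einf (fun x : R => (x * g x)%:E) (0%R^'+)
     <= limf_esup (fun x : R => (x * g x)%:E) (0%R^'+))%E ->
  (limf_esup (fun x : R => (x * g x)%:E) (0%R^'+) < 0)%E ->
  standard_BM P W ->
  market_model P delta g W X zeta ->
  {ae P, forall w, forall i, 0 < market_weight (X w 0) i < 1 - delta} ->
  {ae P, forall w, forall (i : 'I_n) (T : R), 0 <= T ->
     exists eps, 0 < eps /\
       forall t, 0 <= t <= T -> (t%:E < zeta w)%E ->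
         eps <= market_weight (X w t) i}.
Proof.
move=> _ dH ad Hinf _ Hsup [_ BMae _] [_ _ MMae] _.
have [a1 a10 [c c0 Ha]] := esup_neg (f := fun x => x * g x) Hsup.
have [e0 e00 [C0 HC0]] := einf_fin (f := fun x => x * g x) Hinf.
have [C [C0' HC]] : exists C, 0 <= C /\ forall x, 0 < x -> x < 1 - delta -> - (x * g x) <= C.
  apply: (g_global dH ad e00) => x x0 xe; apply: HC0 => //; by rewrite add0r.
have gc := adm_cont ad.
apply: filterS2 BMae MMae => w Bw [Z0 Hpos HX Heq _] i T T0.
apply: (@det_bound R n delta g (fun k => W k w) (X w) (zeta w) C a1 c) => //.
- by move=> x x0 xa; apply: Ha => //; rewrite add0r.
- by move=> k; case: (Bw k).
Qed.
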